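(* Let $T$ be a complete theory with monster model $\mathfrak{C}$. Suppose there are a formula $\phi(x,y)$ and a strongly indiscernible tree $(a_\eta)_{\eta\in 2^{<\omega}}$ in $\mathfrak{C}$ such that the set $\{\phi(x,a_{0^n}):n<\omega\}$ has infinitely many realizations in $\mathfrak{C}$, while the formula $\phi(x,a_{\langle 0\rangle})\wedge\phi(x,a_{\langle 1\rangle})$ has only finitely many realizations in $\mathfrak{C}$. Then $T$ has SOP$_2$.
   Context: Here $0^n\in 2^{<\omega}$ denotes the sequence of $n$ zeros, and $\langle 0\rangle,\langle 1\rangle$ are the sequences of length one. Let $\mathcal{L}_0=\{\triangleleft,<_{lex},\wedge\}$ and view $2^{<\omega}$ as an $\mathcal{L}_0$-structure with $\triangleleft$ the prefix (initial segment) order, $<_{lex}$ the lexicographic order, and $\wedge$ the meet (longest common initial segment). A tree $(a_\eta)_{\eta\in S}$ is strongly indiscernible (over $C$) if whenever $\mathrm{qftp}_{\mathcal{L}_0}(\eta_0,\dots,\eta_{n-1})=\mathrm{qftp}_{\mathcal{L}_0}(\nu_0,\dots,\nu_{n-1})$ we have $\mathrm{tp}(a_{\eta_0},\dots,a_{\eta_{n-1}}/C)=\mathrm{tp}(a_{\nu_0},\dots,a_{\nu_{n-1}}/C)$. A formula $\phi(x;y)$ has SOP$_2$ if there are tuples $(b_\eta)_{\eta\in 2^{<\omega}}$ such that for every $\xi\in 2^\omega$ the set $\{\phi(x,b_{\xi|n}):n<\omega\}$ is consistent, and for every pair of $\triangleleft$-incomparable $\eta,\nu$ the formula $\phi(x,b_\eta)\wedge\phi(x,b_\nu)$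 is inconsistent; $T$ has SOP$_2$ if some formula does. *)

(* Defs.v *)
From Stdlib Require List.
From mathcomp Require Import all_boot.

Set Implicit Arguments.
Unset Strict Implicit.
Unset Printing Implicit Defensive.

Record signature := Signature {
  Fsym : Type;
  Rsym : Type;
  far : Fsym -> nat;
  rar : Rsym -> nat }.

Record structure (L : signature) := Structure {
  dom :> Type;
  fint : forall f : Fsym L, ('I_(far f) -> dom) -> dom;
  rint : forall r : Rsym L, ('I_(rar r) -> dom) -> Prop }.

Inductive term (L : signature) : Type :=
  | tvar : nat -> term L
  | tapp : forall f : Fsym L, ('I_(far f) -> term L) -> term L.

Inductive formula (L : signature) : Type :=
  | fequ : term L -> term L -> formula L
  | frel : forall r : Rsym L, ('I_(rar r) -> term L) -> formula L
  | fneg : formula L -> formula L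
  | fand : formula L -> formula L -> formula L
  | fex  : nat -> formula L -> formula L.

Arguments tvar {L}.
Arguments tapp {L}.

Fixpoint teval (L : signature) (M : structure L) (e : nat -> M) (t : term L) : M :=
  match t with
  | tvar v => e v
  | tapp f args => @fint L M f (fun i => teval e (args i))
  end.

Fixpoint tfv (L : signature) (t : term L) (v : nat) : Prop :=
  match t with
  | tvar w => w = v
  | tapp f args => exists i, tfv (args i) v
  end.

Definition upd (M : Type) (e : nat -> M) (v : nat) (a : M) : nat -> M :=
  fun w => if w == v then a else e w.

Fixpoint sat (L : signature) (M : structure L) (e : nat -> M) (phi : formula L) : Prop :=
  match phi with
  | fequ t1 t2 => teval e t1 = teval e t2
  | frel r args => @rint L M r (fun i => teval e (args i))
  | fneg p => ~ sat e p
  | fand p q => sat e p /\ sat e q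
  | fex v p => exists a : M, sat (upd e v a) p
  end.

Fixpoint ffv (L : signature) (phi : formula L) (v : nat) : Prop :=
  match phi with
  | fequ t1 t2 => tfv t1 v \/ tfv t2 v
  | frel r args => exists i, tfv (args i) v
  | fneg p => ffv p v
  | fand p q => ffv p v \/ ffv q v
  | fex w p => w <> v /\ ffv p v
  end.

Definition fv_bound (L : signature) (phi : formula L) (N : nat) : Prop :=
  forall v, ffv phi v -> v < N.

(* environment for a formula psi(x; c): variables 0..p-1 are the tuple x,
   variable p+i is c i *)
Definition penv (M : Type) (p : nat) (x c : nat -> M) : nat -> M :=
  fun v => if v < p then x v else c (v - p).

(* aleph_1-saturation: every countable set of formulas in finitely many
   variables x_0..x_{p-1} over countably many parameters, finitely
   satisfiable in M, is realized in M. *)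
Definition aleph1_saturated (L : signature) (M : structure L) : Prop :=
  forall (p : nat) (ps : nat -> formula L) (c : nat -> M),
    (forall N, exists x : nat -> M, forall i, i < N -> sat (penv p x c) (ps i)) ->
    exists x : nat -> M, forall i, sat (penv p x c) (ps i).

(* "the set of n-tuples satisfying P is finite": a finite list covers them
   (tuples are compared on their first n coordinates). *)
Definition finitely_many (M : Type) (n : nat) (P : (nat -> M) -> Prop) : Prop :=
  exists l : list (nat -> M),
    forall x, P x -> exists x', List.In x' l /\ forall i, i < n -> x i = x' i.

Definition tle (eta nu : seq bool) : bool := take (size eta) nu == eta.

Fixpoint tmeet (eta nu : seq bool) : seq bool :=
  match eta, nu with
  | a :: eta', b :: nu' => if a == b then a :: tmeet eta' nu' else [::]
  | _, _ => [::]
  end.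

Definition tlex (eta nu : seq bool) : bool :=
  (tle eta nu && (eta != nu))
  || (tle (rcons (tmeet eta nu) false) eta && tle (rcons (tmeet eta nu) true) nu).

Inductive l0term : Type :=
  | l0var : nat -> l0term
  | l0meet : l0term -> l0term -> l0term.

Fixpoint l0eval (etas : seq (seq bool)) (t : l0term) : seq bool :=
  match t with
  | l0var i => nth [::] etas i
  | l0meet t1 t2 => tmeet (l0eval etas t1) (l0eval etas t2)
  end.

Fixpoint l0bound (t : l0term) (k : nat) : bool :=
  match t with
  | l0var i => i < k
  | l0meet t1 t2 => l0bound t1 k && l0bound t2 k
  end.

(* qftp_{L0}(etas) = qftp_{L0}(nus): same length and the same atomic
   L0-formulas (=, prefix, <lex between L0-terms) hold. *)
Definition qftp_eq (etas nus : seq (seq bool)) : Prop :=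
  size etas = size nus /\
  forall t1 t2, l0bound t1 (size etas) -> l0bound t2 (size etas) ->
    [/\ (l0eval etas t1 == l0eval etas t2) = (l0eval nus t1 == l0eval nus t2),
        tle (l0eval etas t1) (l0eval etas t2) = tle (l0eval nus t1) (l0eval nus t2)
      & tlex (l0eval etas t1) (l0eval etas t2) = tlex (l0eval nus t1) (l0eval nus t2)].

(* environment listing a_{eta_0}, ..., a_{eta_{k-1}} (each an m-tuple):
   variable j*m + i is the i-th coordinate of a_{eta_j} *)
Definition tenv (M : Type) (m : nat) (a : seq bool -> nat -> M)
  (etas : seq (seq bool)) : nat -> M :=
  fun v => a (nth [::] etas (v %/ m)) (v %% m).

Definition strongly_indiscernible (L : signature) (M : structure L) (m : nat)
  (a : seq bool -> nat -> M) : Prop :=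
  forall etas nus : seq (seq bool), qftp_eq etas nus ->
    forall psi : formula L, fv_bound psi (size etas * m) ->
      (sat (tenv m a etas) psi <-> sat (tenv m a nus) psi).

Definition restr (xi : nat -> bool) (k : nat) : seq bool := mkseq xi k.

(* phi(x;y), |x| = n, |y| = m, has SOP2 (in M): consistency = finite
   satisfiability in M *)
Definition has_SOP2_formula (L : signature) (M : structure L) (n m : nat)
  (phi : formula L) : Prop :=
  exists b : seq bool -> nat -> M,
    (forall (xi : nat -> bool) (N : nat),
        exists x : nat -> M, forall k, k <= N -> sat (penv n x (b (restr xi k))) phi)
    /\ (forall eta nu : seq bool, ~~ tle eta nu -> ~~ tle nu eta ->
        ~ exists x : nat -> M, sat (penv n x (b eta)) phi /\ sat (penv n x (b nu)) phi).

Definition has_SOP2 (L : signature) (M : structure L) : Prop :=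
  exists (n m : nat) (phi : formula L), fv_bound phi (n + m) /\ has_SOP2_formula M n m phi.

(* Main.v *)
Require Import Defs.
From mathcomp Require Import all_boot zify.
From Stdlib Require Import FunctionalExtensionality Classical.
Set Implicit Arguments. Unset Strict Implicit. Unset Printing Implicit Defensive.

Definition agree (T : Type) (n : nat) (x y : nat -> T) := forall l, l < n -> x l = y l.

Section Logic.
Variable L : signature.
Variable M : structure L.

Lemma teval_agree (t : term L) (e1 e2 : nat -> M) :
  (forall v, tfv t v -> e1 v = e2 v) -> teval e1 t = teval e2 t.
Proof.
elim: t => [v|f args IH] H /=; first by apply: H.
congr (fint _); apply: functional_extensionality => i; apply: IH => v Hv; apply: H; by exists i.
Qed.

Lemma sat_agree (p : formula L) : forall (e1 e2 : nat -> M),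
  (forall v, ffv p v -> e1 v = e2 v) -> (sat e1 p <-> sat e2 p).
Proof.
elim: p => [t1 t2|r args|p IH|p IHp q IHq|w p IH] e1 e2 H /=.
- rewrite (teval_agree (t:=t1) (e1:=e1) (e2:=e2)); last by move=> v Hv; apply: H; left.
  rewrite (teval_agree (t:=t2) (e1:=e1) (e2:=e2)) //; by move=> v Hv; apply: H; right.
- have -> : (fun i => teval e1 (args i)) = (fun i => teval e2 (args i)) => //.
  apply: functional_extensionality => i; apply: teval_agree => v Hv; apply: H; by exists i.
- by rewrite (IH e1 e2 H).
- rewrite (IHp e1 e2) ?(IHq e1 e2) //; move=> v Hv; apply: H; by [right|left].
- split=> [[x Hx]|[x Hx]]; exists x.
  + apply/(IH (upd e1 w x)) => // v Hv; rewrite /upd; case: eqP => // /eqP Hne.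
    apply: H; split => // Hw; by rewrite Hw eqxx in Hne.
  + apply/(IH (upd e1 w x) (upd e2 w x)) => // v Hv; rewrite /upd; case: eqP => // /eqP Hne.
    apply: H; split => // Hw; by rewrite Hw eqxx in Hne.
Qed.

Lemma sat_agree1 (p : formula L) (e1 e2 : nat -> M) :
  (forall v, ffv p v -> e1 v = e2 v) -> sat e1 p -> sat e2 p.
Proof. move=> H; by move/(sat_agree H). Qed.

Definition ftt : formula L := fneg (fex 0 (fneg (fequ (tvar 0) (tvar 0)))).
Lemma sat_ftt (e : nat -> M) : sat e ftt.
Proof. by move=> /= [x]; apply. Qed.
Lemma ffv_ftt v : ~ ffv ftt v.
Proof. by move=> /= [H [H1|H1]]; apply: H. Qed.

Fixpoint fandn (F : nat -> formula L) k :=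
  match k with 0 => ftt | k'.+1 => fand (fandn F k') (F k') end.

Lemma sat_fandn (e : nat -> M) F k : sat e (fandn F k) <-> forall i, i < k -> sat e (F i).
Proof.
elim: k => [|k IH] /=; first by split => // _; exact: sat_ftt.
rewrite IH; split=> [[H1 H2] i|H]; last by split => [i Hi|]; apply: H; lia.
rewrite ltnS leq_eqVlt => /orP [/eqP ->|]; [done | exact: H1].
Qed.

Lemma ffv_fandn F k v : ffv (fandn F k) v -> exists2 i, i < k & ffv (F i) v.
Proof.
elim: k => [|k IH] /=; first by move/ffv_ftt.
move=> [/IH [i Hi Hv]|Hv]; [exists i => //; lia | by exists k].
Qed.

Fixpoint fexr (lo len : nat) (p : formula L) :=
  match len with 0 => p | len'.+1 => fex lo (fexr lo.+1 len' p) end.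

Lemma sat_fexr len : forall lo (e : nat -> M) p, sat e (fexr lo len p) <->
  exists f : nat -> M, sat (fun v => if (lo <= v) && (v < lo + len) then f v else e v) p.
Proof.
elim: len => [|len IH] lo e p /=.
  split=> [H|[f]]; first exists e.
  - by have -> : (fun v => if (lo <= v) && (v < lo + 0) then e v else e v) = e
      by apply: functional_extensionality => v; case: ifP.
  - by have -> : (fun v => if (lo <= v) && (v < lo + 0) then f v else e v) = e
      by apply: functional_extensionality => v; case: ifP => //; lia.
split=> [[x /IH [f Hf]]|[f Hf]].
  exists (fun v => if v == lo then x else f v).
  suff E : (fun v => if (lo.+1 <= v) && (v < lo.+1 + len) then f v else upd e lo x v) =
     (fun v => if (lo <= v) && (v < lo + len.+1) then (if v == lo then x else f v) else e v).
    by rewrite -E.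
  apply: functional_extensionality => v; rewrite /upd.
  case: (ltngtP v lo) => Hv; repeat (case: ifP => ?); try lia; subst; rewrite ?eqxx //.
exists (f lo); apply/IH; exists f.
have -> // : (fun v => if (lo.+1 <= v) && (v < lo.+1 + len) then f v else upd e lo (f lo) v) =
     (fun v => if (lo <= v) && (v < lo + len.+1) then f v else e v).
apply: functional_extensionality => v; rewrite /upd.
case: (ltngtP v lo) => Hv; repeat (case: ifP => ?); try lia; subst; rewrite ?eqxx //.
Qed.

Lemma ffv_fexr len : forall lo p v, ffv (fexr lo len p) v -> ~~ ((lo <= v) && (v < lo + len)) /\ ffv p v.
Proof.
elim: len => [|len IH] lo p v /=; first by move=> H; split => //; lia.
move=> [Hne /IH [H1 H2]]; split => //; lia.
Qed.


Definition eqs (F G : nat -> nat) k : formula L := fandn (fun j => fequ (tvar (F j)) (tvar (G j))) k.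
Lemma sat_eqs (e : nat -> M) F G k : sat e (eqs F G k) <-> forall j, j < k -> e (F j) = e (G j).
Proof. by rewrite /eqs sat_fandn. Qed.
Lemma ffv_eqs F G k v : ffv (eqs F G k) v -> exists2 j, j < k & (F j = v \/ G j = v).
Proof. by move/ffv_fandn => [j Hj /= H]; exists j. Qed.

Definition assign (sg : nat -> nat) (N H : nat) (p : formula L) :=
  fexr H N (fand (eqs (fun j => H + j) sg N) (fexr 0 N (fand (eqs id (fun j => H + j) N) p))).

Lemma sat_assign (e : nat -> M) sg N H p : fv_bound p N -> N <= H -> (forall j, j < N -> sg j < H) ->
  (sat e (assign sg N H p) <-> sat (fun j => e (sg j)) p).
Proof.
move=> Hp HN Hsg; rewrite /assign sat_fexr; split.
- move=> [f /= [/sat_eqs H1 /sat_fexr [g /= [/sat_eqs H2 H3]]]].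
  move: H3; apply: sat_agree1 => v /Hp Hv /=.
  move: (H2 v Hv) (H1 v Hv) (Hsg v Hv); repeat (case: ifP => ?); try lia; congruence.
- move=> Hs; exists (fun v => e (sg (v - H))) => /=; split.
    apply/sat_eqs => j Hj; rewrite addKn.
    move: (Hsg j Hj); repeat (case: ifP => ?); try lia; congruence.
  apply/sat_fexr; exists (fun v => e (sg v)) => /=; split.
    apply/sat_eqs => j Hj; rewrite addKn.
    move: (Hsg j Hj); repeat (case: ifP => ?); try lia; congruence.
  move: Hs; apply: sat_agree1 => v /Hp Hv /=.
  move: (Hsg v Hv); repeat (case: ifP => ?); try lia; congruence.
Qed.

Lemma ffv_assign sg N H p v : fv_bound p N -> N <= H -> ffv (assign sg N H p) v ->
  exists2 j, j < N & v = sg j.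
Proof.
move=> Hp HN /ffv_fexr [Hr [/ffv_eqs [j Hj [E|E]]|/ffv_fexr [Hr2 [/ffv_eqs [j Hj [E|E]]|/Hp]]]].
- lia.
- by exists j.
- rewrite /= in E; lia.
- lia.
- lia.
Qed.

Lemma divmod_help q r d : r < d -> (q * d + r) %/ d = q /\ (q * d + r) %% d = r.
Proof.
move=> Hr; split; first by rewrite divnMDl ?divn_small ?addn0 //; lia.
by rewrite modnMDl modn_small.
Qed.


Section Chi.
Variables (n m K : nat) (phi : formula L).
Hypothesis Hphi : fv_bound phi (n + m).

Definition tau i j := if j < n then i * n + j else K * n + (j - n).
Definition Hc := K * n + m + (n + m).
Definition dist i j := fneg (eqs (fun l => i * n + l) (fun l => j * n + l) n).
Definition chi := fand (fandn (fun i => assign (tau i) (n + m) Hc phi) K)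
                      (fandn (fun i => fandn (fun j => dist i j) i) K).

Lemma sat_chi (X c : nat -> M) : sat (penv (K * n) X c) chi <->
  (forall i, i < K -> sat (penv n (fun l => X (i * n + l)) c) phi) /\
  (forall i j, i < K -> j < i -> ~ agree n (fun l => X (i*n+l)) (fun l => X (j*n+l))).
Proof.
have E1 : forall i, i < K -> (sat (penv (K * n) X c) (assign (tau i) (n + m) Hc phi) <->
    sat (penv n (fun l => X (i * n + l)) c) phi).
  move=> i Hi; rewrite sat_assign //; last first.
  - move=> j Hj; rewrite /tau /Hc; case: ifP => ?; nia.
  - rewrite /Hc; lia.
  split; apply: sat_agree1 => v /Hphi Hv; rewrite /penv /tau; case: (ltnP v n) => Hvn.
  - rewrite (_ : i * n + v < K * n) //; nia.
  - rewrite (_ : (K * n + (v - n) < K * n) = false) ?addKn //; lia.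
  - rewrite (_ : i * n + v < K * n) //; nia.
  - rewrite (_ : (K * n + (v - n) < K * n) = false) ?addKn //; lia.
have E2 : forall i j, i < K -> j < i -> (sat (penv (K * n) X c) (dist i j) <->
   ~ agree n (fun l => X (i*n+l)) (fun l => X (j*n+l))).
  move=> i j Hi Hj; rewrite /dist /= sat_eqs /agree /penv.
  split=> H1 H2; apply: H1 => l Hl; move: (H2 l Hl); repeat (case: ifP => ?); try nia; done.
rewrite /chi /= !sat_fandn; split.
- move=> [H1 H2]; split => [i Hi|i j Hi Hj]; first by apply/E1 => //; apply: H1.
  apply/E2 => //; move: (H2 i Hi); rewrite sat_fandn; by apply.
- move=> [H1 H2]; split => [i Hi|i Hi]; first by apply/E1 => //; apply: H1.
  apply/sat_fandn => j Hj; apply/E2 => //; by apply: H2.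
Qed.

Lemma fv_chi : fv_bound chi (K * n + m).
Proof.
move=> v /= [/ffv_fandn [i Hi]|/ffv_fandn [i Hi /ffv_fandn [j Hj]]].
- move/ffv_assign; case => //; first by rewrite /Hc; lia.
  move=> j Hj ->; rewrite /tau; case: ifP => ?; nia.
- rewrite /dist; move=> /(@ffv_eqs _ _ _ v) [l Hl [E|E]]; nia.
Qed.

Definition sig s j l := if l < K * n then s * m + l else j * m + (l - K * n).
Definition Hb s := s * m + K * n + (K * n + m).
Definition Psi s := fexr (s * m) (K * n) (fandn (fun j => assign (sig s j) (K*n+m) (Hb s) chi) s).

Lemma fv_Psi s : fv_bound (Psi s) (s * m).
Proof.
move=> v /ffv_fexr [Hr /ffv_fandn [j Hj /ffv_assign H]].
case: H => //; [exact: fv_chi | rewrite /Hb; lia | ].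
move=> l Hl E; subst v; rewrite /sig; case: ifP => ?; last nia.
move: Hr; rewrite /sig; case: ifP => ?; lia.
Qed.

Lemma sat_Psi (a : seq bool -> nat -> M) etas :
  sat (tenv m a etas) (Psi (size etas)) <->
  exists X, forall j, j < size etas -> sat (penv (K*n) X (a (nth [::] etas j))) chi.
Proof.
set s := size etas.
have E : forall f j, j < s -> (sat (fun v => if (s * m <= v) && (v < s * m + K * n) then f v
           else tenv m a etas v) (assign (sig s j) (K*n+m) (Hb s) chi) <->
         sat (penv (K*n) (fun l => f (s * m + l)) (a (nth [::] etas j))) chi).
  move=> f j Hj; rewrite sat_assign; last first.
  - move=> l Hl; rewrite /sig /Hb; case: ifP => ?; nia.
  - rewrite /Hb; lia.
  - exact: fv_chi.
  have Ev : forall v, v < K * n + m ->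
    (fun v => if (s * m <= v) && (v < s * m + K * n) then f v else tenv m a etas v) (sig s j v) =
    penv (K * n) (fun l => f (s * m + l)) (a (nth [::] etas j)) v.
    move=> v Hv; rewrite /penv /sig; case: (ltnP v (K * n)) => Hvn.
      rewrite (_ : (s * m <= s * m + v) && (s * m + v < s * m + K * n) = true) //; lia.
    rewrite (_ : (s * m <= j * m + (v - K * n)) && _ = false); last nia.
    by rewrite /tenv; case: (divmod_help j (r := v - K * n) (d := m) ltac:(lia)) => -> ->.
  by split; apply: sat_agree1 => v /fv_chi Hv; rewrite Ev.
rewrite /Psi sat_fexr; split.
- move=> [f /sat_fandn H]; exists (fun l => f (s * m + l)) => j Hj; apply/E => //; exact: H.
- move=> [X HX]; exists (fun v => X (v - s * m)); apply/sat_fandn => j Hj; apply/E => //.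
  move: (HX j Hj); apply: sat_agree1 => v _; by rewrite /penv addKn.
Qed.

End Chi.
End Logic.

Lemma tle_nil t : tle [::] t. Proof. by rewrite /tle take0. Qed.
Lemma tle_nilr b s : tle (b :: s) [::] = false. Proof. by []. Qed.
Lemma tle_cons b c s t : tle (b :: s) (c :: t) = (c == b) && tle s t.
Proof. by rewrite /tle /= eqseq_cons. Qed.
Lemma tle_catl mu s t : tle (mu ++ s) (mu ++ t) = tle s t.
Proof. by elim: mu => [|b mu IH] //=; rewrite tle_cons eqxx. Qed.
Lemma tle_refl s : tle s s. Proof. by rewrite /tle take_size. Qed.
Lemma tle_cat s r : tle s (s ++ r). Proof. by rewrite /tle take_size_cat. Qed.
Lemma tle_size s t : tle s t -> size s <= size t.
Proof. rewrite /tle => H; rewrite -(eqP H) size_take; case: ltnP => // ?; lia. Qed.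
Lemma tle_rcons_self s b : tle (rcons s b) s = false.
Proof. apply/negbTE/negP => /tle_size; rewrite size_rcons; lia. Qed.

Lemma tmeet_id s : tmeet s s = s.
Proof. by elim: s => [|b s IH] //=; rewrite eqxx IH. Qed.
Lemma tmeet_catl mu s t : tmeet (mu ++ s) (mu ++ t) = mu ++ tmeet s t.
Proof. by elim: mu => [|b mu IH] //=; rewrite eqxx IH. Qed.
Lemma tmeet_prefl s r : tmeet s (s ++ r) = s.
Proof. by elim: s => [|b s IH] //=; rewrite eqxx IH. Qed.
Lemma tmeet_prefr s r : tmeet (s ++ r) s = s.
Proof. by elim: s => [|b s IH] /=; [case: r | rewrite eqxx IH]. Qed.

Fixpoint minv (t : l0term) := match t with l0var i => i | l0meet t1 t2 => minn (minv t1) (minv t2) end.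

Lemma restr_cat xi i j : i <= j -> exists r, restr xi j = restr xi i ++ r.
Proof.
move=> Hij; exists (map xi (iota i (j - i))).
by rewrite /restr /mkseq {1}(_ : j = i + (j - i)) ?iotaD ?map_cat //; lia.
Qed.

Lemma meet_restr xi i j : tmeet (restr xi i) (restr xi j) = restr xi (minn i j).
Proof.
case: (leqP i j) => H.
  by have [r ->] := restr_cat xi H; rewrite tmeet_prefl.
have H' : j <= i by lia.
by have [r ->] := restr_cat xi H'; rewrite tmeet_prefr.
Qed.

Lemma eval_chain xi k t : l0bound t k -> l0eval (mkseq (restr xi) k) t = restr xi (minv t).
Proof.
elim: t => [i|t1 IH1 t2 IH2] /=; first by move=> H; rewrite nth_mkseq.
by move/andP => [H1 H2]; rewrite IH1 // IH2 // meet_restr.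
Qed.

Lemma restr_eq xi i j : (restr xi i == restr xi j) = (i == j).
Proof. apply/eqP/eqP => [E|->//]; by move: (congr1 size E); rewrite !size_mkseq. Qed.

Lemma restr_tle xi i j : tle (restr xi i) (restr xi j) = (i <= j).
Proof.
case: (leqP i j) => H; first by have [r ->] := restr_cat xi H; exact: tle_cat.
apply/negbTE/negP => /tle_size; rewrite !size_mkseq; lia.
Qed.

Lemma restr_tlex xi i j : tlex (restr xi i) (restr xi j) = (i < j).
Proof.
rewrite /tlex restr_tle restr_eq meet_restr.
have -> : tle (rcons (restr xi (minn i j)) false) (restr xi i) &&
          tle (rcons (restr xi (minn i j)) true) (restr xi j) = false.
  apply/negbTE/negP => /andP [/tle_size H1 /tle_size H2]; move: H1 H2.
  rewrite !size_rcons !size_mkseq; lia.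
rewrite orbF; case: (ltngtP i j) => H //=; lia.
Qed.

Lemma qftp_chain xi xi' k : qftp_eq (mkseq (restr xi) k) (mkseq (restr xi') k).
Proof.
split; first by rewrite !size_mkseq.
rewrite size_mkseq => t1 t2 H1 H2.
by rewrite !eval_chain // !restr_eq !restr_tle !restr_tlex.
Qed.

Lemma eval_catmu mu etas t : l0bound t (size etas) ->
  l0eval (map (cat mu) etas) t = mu ++ l0eval etas t.
Proof.
elim: t => [i|t1 IH1 t2 IH2] /=; first by move=> H; rewrite (nth_map [::]).
by move/andP => [H1 H2]; rewrite IH1 // IH2 // tmeet_catl.
Qed.

Lemma tlex_catl mu s t : tlex (mu ++ s) (mu ++ t) = tlex s t.
Proof. by rewrite /tlex tmeet_catl !rcons_cat !tle_catl eqseq_cat // eqxx. Qed.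

Lemma qftp_catmu mu etas : qftp_eq (map (cat mu) etas) etas.
Proof.
split; first by rewrite size_map.
rewrite size_map => t1 t2 H1 H2.
by rewrite !eval_catmu // eqseq_cat // eqxx tle_catl tlex_catl.
Qed.

Definition sel (e n : seq bool) i := if i == 0 then false :: e else if i == 1 then true :: n else [::].
Fixpoint cls (t : l0term) := match t with l0var i => i
  | l0meet t1 t2 => if cls t1 == cls t2 then cls t1 else 2 end.

Lemma meet_sel e n i j : i < 3 -> j < 3 ->
  tmeet (sel e n i) (sel e n j) = sel e n (if i == j then i else 2).
Proof.
by case: i => [|[|[|]]] //; case: j => [|[|[|]]] //= _ _; rewrite ?tmeet_id.
Qed.

Lemma eval_pair e n t : l0bound t 2 ->
  l0eval [:: false :: e; true :: n] t = sel e n (cls t) /\ cls t < 3.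
Proof.
elim: t => [i|t1 IH1 t2 IH2] /=.
  by case: i => [|[|]].
move/andP => [/IH1 [-> H1] /IH2 [-> H2]]; rewrite meet_sel //; split => //.
by case: eqP.
Qed.

Lemma rel_sel e n e' n' i j : i < 3 -> j < 3 ->
  [/\ (sel e n i == sel e n j) = (sel e' n' i == sel e' n' j),
      tle (sel e n i) (sel e n j) = tle (sel e' n' i) (sel e' n' j)
    & tlex (sel e n i) (sel e n j) = tlex (sel e' n' i) (sel e' n' j)].
Proof.
case: i => [|[|[|]]] //; case: j => [|[|[|]]] //= _ _;
  rewrite /tlex ?tmeet_id ?eqxx ?tle_refl ?tle_nil ?tle_nilr ?tle_cons ?eqseq_cons /=
    ?tle_rcons_self ?tle_nil ?tle_refl ?andbF //.
Qed.

Lemma qftp_pair e n e' n' : qftp_eq [:: false :: e; true :: n] [:: false :: e'; true :: n'].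
Proof.
split => // t1 t2 H1 H2.
have [-> c1] := eval_pair e n H1; have [-> c2] := eval_pair e n H2.
have [-> _] := eval_pair e' n' H1; have [-> _] := eval_pair e' n' H2.
exact: rel_sel.
Qed.

Lemma incomp_split eta nu : ~~ tle eta nu -> ~~ tle nu eta ->
  exists mu e n, (eta = mu ++ false :: e /\ nu = mu ++ true :: n) \/
                 (eta = mu ++ true :: e /\ nu = mu ++ false :: n).
Proof.
elim: eta nu => [|b eta IH] [|c nu] //=; rewrite ?tle_nil // !tle_cons.
case: b; case: c => //= H1 H2.
- have [mu [e [n [[-> ->]|[-> ->]]]]] := IH nu H1 H2; exists (true :: mu), e, n; by [left|right].
- by exists [::], eta, nu; right.
- by exists [::], eta, nu; left.
- have [mu [e [n [[-> ->]|[-> ->]]]]] := IH nu H1 H2; exists (false :: mu), e, n; by [left|right].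
Qed.

Lemma restr_false k : restr (fun _ => false) k = nseq k false.
Proof.
apply: (@eq_from_nth _ false); rewrite ?size_mkseq ?size_nseq // => i Hi.
by rewrite nth_mkseq // nth_nseq Hi.
Qed.

Lemma in_idx (T : Type) (x : T) (l : list T) d : List.In x l -> exists2 j, j < size l & nth d l j = x.
Proof. elim: l => [|y l IH] //= [->|/IH [j Hj E]]; [by exists 0 | by exists j.+1]. Qed.

Lemma nth_In_seq (T : Type) (l : seq T) d i : i < size l -> List.In (nth d l i) l.
Proof. elim: l i => [|y l IH] [|i] //= Hi; [by left | right; exact: IH]. Qed.

Lemma many_distinct (T : Type) (d : nat -> T) n (P : (nat -> T) -> Prop) :
  ~ finitely_many n P -> forall K, exists ls : seq (nat -> T), [/\ size ls = K,
    (forall i, i < K -> P (nth d ls i)) &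
    (forall i j, i < K -> j < i -> ~ agree n (nth d ls i) (nth d ls j))].
Proof.
move=> Hinf; elim=> [|K [ls [Hs HP HD]]]; first by exists [::].
case: (classic (exists x, P x /\ forall i, i < K -> ~ agree n x (nth d ls i))) => [[x [Px Hx]]|Hno].
  exists (rcons ls x); split; first by rewrite size_rcons Hs.
  - move=> i Hi; rewrite nth_rcons Hs; case: ltnP => H; first exact: HP.
    by rewrite (_ : i == K) //; lia.
  - move=> i j Hi Hj; rewrite !nth_rcons Hs (_ : j < K); last lia.
    case: ltnP => H; first exact: HD.
    by rewrite (_ : i == K); [apply: Hx; lia | lia].
exfalso; apply: Hinf; exists ls => x Px; apply: NNPP => Hn; apply: Hno; exists x; split => //.
move=> i Hi Hag; apply: Hn; exists (nth d ls i); split; first by apply: nth_In_seq; rewrite Hs.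
exact: Hag.
Qed.

Lemma pigeon (T : Type) n (l : seq (nat -> T)) K (X : nat -> nat -> T) (d : nat -> T) :
  size l < K ->
  (forall i, i < K -> exists2 j, j < size l & agree n (X i) (nth d l j)) ->
  exists i j, [/\ i < K, j < i & agree n (X i) (X j)].
Proof.
move=> HK H.
have : forall i : 'I_K, exists j : 'I_(size l), agree n (X i) (nth d l j).
  move=> i; have [j Hj Ha] := H i (ltn_ord i); by exists (Ordinal Hj).
move/fin_all_exists => [f Hf].
apply: NNPP => Hno.
have inj : injective f.
  move=> i i' E; apply: val_inj; case: (ltngtP i i') => // Hii; exfalso; apply: Hno.
  - exists i', i; split => // l0 Hl0; rewrite (Hf i' l0 Hl0) -E -(Hf i l0 Hl0) //.
  - exists i, i'; split => // l0 Hl0; rewrite (Hf i l0 Hl0) E -(Hf i' l0 Hl0) //.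
move: (leq_card f inj); rewrite !card_ord; lia.
Qed.

Theorem proposition3p1 (L : signature) (M : structure L) (HM : aleph1_saturated M)
  (n m : nat) (phi : formula L) (Hphi : fv_bound phi (n + m))
  (a : seq bool -> nat -> M) (Ha : strongly_indiscernible m a)
  (Hinf : ~ finitely_many n
            (fun x : nat -> M => forall k : nat, sat (penv n x (a (nseq k false))) phi))
  (Hfin : finitely_many n
            (fun x : nat -> M => sat (penv n x (a [:: false])) phi /\
                                 sat (penv n x (a [:: true])) phi)) :
  has_SOP2 M.
Proof.
pose d := a [::].
have Hn : 0 < n.
  case: (posnP n) => // Hn0; exfalso; apply: Hinf; exists [:: d] => x _; exists d.
  by split; [left | move=> i; rewrite Hn0].
have [l Hl] := Hfin.
pose K := (size l).+1.
have [ls [Hsz HP HD]] := many_distinct d Hinf K.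
pose X0 := fun v => nth d ls (v %/ n) (v %% n).
have X0E : forall i v, v < n -> X0 (i * n + v) = nth d ls i v.
  by move=> i v Hv; rewrite /X0; case: (divmod_help i Hv) => -> ->.
pose chi := chi n m K phi.
pose Psi := Psi n m K phi.
have Hno : forall X, sat (penv (K*n) X (a [:: false])) chi ->
                     sat (penv (K*n) X (a [:: true])) chi -> False.
  move=> X /(sat_chi K Hphi) [H1 D] /(sat_chi K Hphi) [H2 _].
  have [i [j [Hi Hj Hag]]] : exists i j, [/\ i < K, j < i &
       agree n (fun l0 => X (i * n + l0)) (fun l0 => X (j * n + l0))].
    apply: (pigeon (l := l) (d := d)) => // i Hi.
    have [x' [Hin Hag]] := Hl _ (conj (H1 i Hi) (H2 i Hi)).
    have [j Hj E] := in_idx d Hin; exists j => //; by rewrite E.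
  exact: (D i j Hi Hj Hag).
have Trans : forall eta nu mu e n', [:: eta; nu] = map (cat mu) [:: false :: e; true :: n'] ->
    sat (tenv m a [:: eta; nu]) (Psi 2) -> False.
  move=> eta nu mu e n' E S; rewrite E in S.
  have Hfv : fv_bound (Psi 2) (2 * m) by exact: (fv_Psi (K:=K) Hphi).
  move/(Ha _ _ (qftp_catmu mu [:: false :: e; true :: n']) _ Hfv): S.
  move/(Ha _ _ (qftp_pair e n' [::] [::]) _ Hfv).
  move/(sat_Psi K Hphi) => [X HX]; exact: (Hno X (HX 0 isT) (HX 1 isT)).
exists (K * n), m, chi; split; first exact: (fv_chi (K:=K) Hphi).
exists a; split.
- move=> xi N.
  have Hfv : fv_bound (Psi N.+1) (size (mkseq (restr (fun _ => false)) N.+1) * m)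
    by rewrite size_mkseq; exact: (fv_Psi (K:=K) Hphi).
  have S0 : sat (tenv m a (mkseq (restr (fun _ => false)) N.+1)) (Psi N.+1).
    rewrite -{2}(size_mkseq (restr (fun _ => false)) N.+1).
    apply/(sat_Psi K Hphi); exists X0 => j Hj; apply/(sat_chi K Hphi); split.
    + move=> i Hi; have Hj' : j < N.+1 by move: Hj; rewrite size_mkseq.
      rewrite (nth_mkseq _ _ Hj') restr_false.
      move: (HP i Hi j); apply: sat_agree1 => v /Hphi Hv; rewrite /penv.
      by case: ifP => // Hvn; rewrite X0E.
    + move=> i j' Hi Hj' Hag; apply: (HD i j' Hi Hj') => v Hv.
      by rewrite -!X0E //; apply: Hag.
  move/(Ha _ _ (qftp_chain _ xi N.+1) _ Hfv): S0.
  rewrite -{2}(size_mkseq (restr xi) N.+1).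
  move/(sat_Psi K Hphi) => [X HX]; exists X => k Hk.
  move: (HX k); rewrite size_mkseq nth_mkseq; last lia.
  by apply; lia.
- move=> eta nu H1 H2 [X [S1 S2]].
  have [mu [e [n' [[E1 E2]|[E1 E2]]]]] := incomp_split H1 H2.
  + apply: (Trans eta nu mu e n'); first by rewrite E1 E2.
    apply/(sat_Psi K Hphi a [:: eta; nu]); exists X => -[|[|]] //.
  + apply: (Trans nu eta mu n' e); first by rewrite E1 E2.
    apply/(sat_Psi K Hphi a [:: nu; eta]); exists X => -[|[|]] //.
Qed.
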